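(* Let $\Xi\subseteq\mathbb{R}^d$ be a Polish space with Borel $\sigma$-algebra, equipped with a norm $\|\cdot\|$, and let $\boldsymbol{\xi}_1,\boldsymbol{\xi}_2,\dots$ be independent $\Xi$-valued random variables, $\boldsymbol{\xi}_i$ having distribution $\mathbb{P}_i$. Let $\rho:\mathbb{R}_+\to\mathbb{R}_+$ with $\rho(0)=0$ satisfy $W(\mathbb{P}_i,\mathbb{P}_{i+k})\le\rho(k)$ for all $i\ge1$, $k\ge0$. Let $\mathcal{X}\subseteq\mathbb{R}^n$, $g:\mathbb{R}^n\times\mathbb{R}^d\to\mathbb{R}$ with $g(x,\cdot)$ measurable for every $x$, $N$ a positive integer, and $r_1,\dots,r_N>0$. For $i\in[N]$ let $U_{r_i}(\boldsymbol{\xi}_i):=\{u\in\Xi:\|u-\boldsymbol{\xi}_i\|\le r_i\}$. Then for every $x\in\mathcal{X}$ and every $i\in[N]$, $$\mathbb{P}\big(g(x,u)\le0\ \ \forall u\in U_{r_i}(\boldsymbol{\xi}_i)\big)\le\mathbb{P}\big(g(x,\boldsymbol{\xi}_{N+1})\le0\big)+\frac{\rho(N+1-i)}{r_i}.$$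
   Context: The 1-Wasserstein distance between probability measures $\mathbb{P},\mathbb{P}'$ on $\Xi$ is $W(\mathbb{P},\mathbb{P}'):=\inf_{\pi\in\Pi(\mathbb{P},\mathbb{P}')}\int_{\Xi\times\Xi}\|\xi-\xi'\|\,\pi(d\xi,d\xi')$, where $\Pi(\mathbb{P},\mathbb{P}')$ is the set of couplings with marginals $\mathbb{P}$ and $\mathbb{P}'$. $[N]=\{1,\dots,N\}$. *)

(* Defs.v *)
From HB Require Import structures.
From mathcomp Require Import all_boot all_order all_algebra.
From mathcomp Require Import all_classical all_reals all_analysis.
Set Implicit Arguments. Unset Strict Implicit. Unset Printing Implicit Defensive.
Import Order.TTheory GRing.Theory Num.Theory.
Import numFieldNormedType.Exports.
Local Open Scope classical_set_scope.
Local Open Scope ring_scope.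

(* R^d equipped with its Borel sigma-algebra (generated by the open sets of
   the usual topology of R^d; all norms on R^d induce that topology). *)
Definition Borel (R : realType) (d : nat) := g_sigma_algebraType (@open 'rV[R]_d).

Definition is_norm (R : realType) (d : nat) (nrm : 'rV[R]_d -> R) : Prop :=
  [/\ forall x, nrm x = 0 -> x = 0,
      forall (a : R) x, nrm (a *: x) = `|a| * nrm x &
      forall x y, nrm (x + y) <= nrm x + nrm y].

Definition is_polish (R : realType) (d : nat) (Xi : set 'rV[R]_d) : Prop :=
  exists dist : 'rV[R]_d -> 'rV[R]_d -> R,
  (forall x y, Xi x -> Xi y -> 0 <= dist x y) /\
      (forall x y, Xi x -> Xi y -> (dist x y = 0 <-> x = y)) /\
      (forall x y, Xi x -> Xi y -> dist x y = dist y x) /\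
      (forall x y z, Xi x -> Xi y -> Xi z -> dist x z <= dist x y + dist y z) /\
      (forall A, A `<=` Xi ->
         ((exists O, open O /\ A = O `&` Xi) <->
          (forall x, A x -> exists e : R, 0 < e /\
                      forall y, Xi y -> dist x y < e -> A y))) /\
      (forall u : nat -> 'rV[R]_d, (forall k, Xi (u k)) ->
         (forall e : R, 0 < e -> exists K, forall m k, (K <= m)%N -> (K <= k)%N ->
              dist (u m) (u k) < e) ->
         exists l, Xi l /\ forall e : R, 0 < e -> exists K, forall k, (K <= k)%N ->
              dist (u k) l < e) /\
      (exists D, D `<=` Xi /\ countable D /\
         forall x (e : R), Xi x -> 0 < e -> exists y, D y /\ dist x y < e).

Definition coupling (R : realType) (d : nat)
  (mu nu : set (Borel R d) -> \bar R) (pi : probability (Borel R d * Borel R d)%type R) : Prop :=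
  (forall A : set (Borel R d), measurable A -> pi (A `*` setT) = mu A) /\
  (forall A : set (Borel R d), measurable A -> pi (setT `*` A) = nu A).

Definition wasserstein (R : realType) (d : nat) (nrm : 'rV[R]_d -> R)
  (mu nu : set (Borel R d) -> \bar R) : \bar R :=
  ereal_inf [set (\int[pi]_z (nrm ((z.1 : 'rV[R]_d) - z.2))%:E)%E
            | pi in [set pi | coupling mu nu pi]].

Definition law (dO : measure_display) (Omega : measurableType dO) (R : realType) (d : nat)
  (P : probability Omega R) (X : Omega -> 'rV[R]_d) : set (Borel R d) -> \bar R :=
  fun A => P (X @^-1` A).

Definition mutually_independent (dO : measure_display) (Omega : measurableType dO)
  (R : realType) (d : nat) (P : probability Omega R) (X : nat -> Omega -> 'rV[R]_d) : Prop :=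
  forall (J : seq nat) (B : nat -> set (Borel R d)),
    uniq J -> all (fun j => (0 < j)%N) J -> (forall j, measurable (B j)) ->
    P (\bigcap_(j in [set` J]) (X j @^-1` B j)) = (\prod_(j <- J) P (X j @^-1` B j))%E.

(* Main.v *)
Require Import Defs.
From HB Require Import structures.
From mathcomp Require Import all_boot all_order all_algebra.
From mathcomp Require Import all_classical all_reals all_analysis.
From mathcomp Require Import ring lra.
Import Order.TTheory GRing.Theory Num.Theory.
Import numFieldNormedType.Exports.
Import HBNNSimple.
Local Open Scope classical_set_scope.
Local Open Scope ring_scope.

Section nrm.
Variables (R : realType) (d : nat) (nrm : 'rV[R]_d -> R).
Hypothesis hn : is_norm nrm.

Lemma nrm0 : nrm 0 = 0.
Proof. case: hn => _ hZ _; by rewrite -(scale0r (0 : 'rV[R]_d)) hZ normr0 mul0r. Qed.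

Lemma nrmN x : nrm (- x) = nrm x.
Proof. case: hn => _ hZ _; by rewrite -scaleN1r hZ normrN normr1 mul1r. Qed.

Lemma nrm_ge0 x : 0 <= nrm x.
Proof.
case: hn => _ _ hD; have := hD x (- x).
rewrite subrr nrm0 nrmN => h.
lra.
Qed.

Lemma nrmB x y : nrm (x - y) = nrm (y - x).
Proof. by rewrite -nrmN opprB. Qed.

Lemma nrm_tri x y z : nrm (x - z) <= nrm (x - y) + nrm (y - z).
Proof. case: hn => _ _ hD; have := hD (x - y) (y - z); by rewrite addrA subrK. Qed.

Lemma nrm_sum (I : Type) (s : seq I) (F : I -> 'rV[R]_d) :
  nrm (\sum_(i <- s) F i) <= \sum_(i <- s) nrm (F i).
Proof.
case: hn => _ _ hD.
elim: s => [|a s IH]; first by rewrite !big_nil nrm0.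
rewrite !big_cons; apply: le_trans (hD _ _) _; exact: lerD.
Qed.

Definition Cn := \sum_(j < d) nrm (delta_mx 0 j).

Lemma nrm_coord (v : 'rV[R]_d) :
  nrm v <= \sum_(j < d) `|v 0 j| * nrm (delta_mx 0 j).
Proof.
case: hn => _ hZ _.
rewrite {1}(matrix_sum_delta v) big_ord1.
apply: le_trans; first exact: nrm_sum.
by apply: ler_sum => j _; rewrite hZ.
Qed.

Lemma coord_le_norm (v : 'rV[R]_d) j : `|v 0 j| <= `|v|.
Proof.
change (`|v 0 j| <= mx_norm v); rewrite mx_normrE.
exact: (le_bigmax 0 (fun ij : 'I_1 * 'I_d => `|v ij.1 ij.2|) (0, j)). Qed.

Lemma nrm_le (v : 'rV[R]_d) : nrm v <= Cn * `|v|.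
Proof.
apply: le_trans (nrm_coord v) _; rewrite /Cn mulr_suml.
apply: ler_sum => j _; rewrite mulrC ler_wpM2l ?nrm_ge0 //.
exact: coord_le_norm.
Qed.


Lemma Cn_ge0 : 0 <= Cn.
Proof. by apply: sumr_ge0 => j _; exact: nrm_ge0. Qed.

Lemma open_nrm_lt (q : 'rV[R]_d) (c : R) : open [set v | nrm (v - q) < c].
Proof.
rewrite openE => x /= hx; rewrite /interior.
apply/nbhs_ballP.
have Cg := Cn_ge0.
set del := c - nrm (x - q).
have dp : 0 < del by rewrite /del subr_gt0.
exists (del / (Cn + 1)); first by rewrite /= divr_gt0 // ltr_wpDl.
move=> y; rewrite -ball_normE /= => hxy.
have h1 := nrm_tri y x q.
have h2 := nrm_le (y - x).
rewrite -normrN opprB in hxy.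
have h3 : Cn * `|y - x| <= Cn * (del / (Cn + 1)).
  by rewrite ler_wpM2l // ltW.
have h4 : Cn * (del / (Cn + 1)) < del.
  rewrite mulrA ltr_pdivrMr ?ltr_wpDl // mulrC ltr_pM2l //.
  by rewrite ltrDl.
rewrite /del in h3 h4; lra.
Qed.

Lemma open_meas (A : set 'rV[R]_d) : open A -> measurable (A : set (Borel R d)).
Proof. move=> oA; exact: sub_sigma_algebra. Qed.

Lemma rat_approx (z : 'rV[R]_d) (e : R) : 0 < e ->
  exists q0 : 'rV[rat]_d, nrm (z - map_mx ratr q0) < e.
Proof.
move=> e0.
have Cg := Cn_ge0.
set eta := e / (Cn + 1).
have etap : 0 < eta by rewrite /eta divr_gt0 // ltr_wpDl.
have : forall j : 'I_d, exists t : rat, `|z 0 j - ratr t| < eta.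
  move=> j; have [t] := @rat_in_itvoo R (z 0 j - eta) (z 0 j + eta) ltac:(lra).
  rewrite in_itv /= => /andP[h1 h2]; exists t.
  rewrite ltr_norml; apply/andP; split; lra.
case/choice => f hf.
exists (\row_j f j).
apply: le_lt_trans (nrm_coord _) _.
apply: (@le_lt_trans _ _ (\sum_(j < d) eta * nrm (delta_mx 0 j))).
  apply: ler_sum => j _; rewrite ler_wpM2r ?nrm_ge0 //.
  by rewrite !mxE; exact: ltW.
rewrite -mulr_sumr -/Cn /eta mulrAC ltr_pdivrMr ?ltr_wpDl // ltr_pM2l //.
by rewrite ltrDl.
Qed.

Definition rball (q0 : 'rV[rat]_d) (s0 : rat) : set 'rV[R]_d :=
  [set v | nrm (v - map_mx ratr q0) < ratr s0].

Lemma rball_meas q0 s0 : measurable (rball q0 s0 : set (Borel R d)).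
Proof. apply: open_meas; exact: open_nrm_lt. Qed.

Lemma rat_between (a b : R) : a < b -> exists t : rat, a < ratr t < b.
Proof.
move=> ab; have [t] := @rat_in_itvoo R a b ab.
by rewrite in_itv /= => h; exists t.
Qed.

Definition I4 := ('rV[rat]_d * 'rV[rat]_d * rat * rat)%type.

Definition Uk (r : R) (k : nat) : set (Borel R d * Borel R d)%type :=
  match @unpickle I4 k with
  | Some (q1, q2, s1, s2) => [set z | (rball q1 s1 `*` rball q2 s2) z /\
        nrm (map_mx ratr q1 - map_mx ratr q2) + ratr s1 + ratr s2 < r]
  | None => set0 end.

Definition U r := \bigcup_k Uk r k.

Lemma U_lt r z : U r z -> nrm (z.1 - z.2) < r.
Proof.
case=> k _; rewrite /Uk; case: (unpickle k) => [[[[q1 q2] s1] s2]|] //=.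
move=> [[h1 h2] h3].
rewrite /rball /= in h1 h2.
have t1 := nrm_tri z.1 (map_mx ratr q1) z.2.
have t2 := nrm_tri (map_mx ratr q1) (map_mx ratr q2) z.2.
rewrite (nrmB z.2) in h2.
lra.
Qed.

Lemma lt_U r z : nrm (z.1 - z.2) < r -> U r z.
Proof.
move=> hz.
set del := r - nrm (z.1 - z.2).
have hdel : del = r - nrm (z.1 - z.2) by [].
have dp : 0 < del by rewrite /del subr_gt0.
clearbody del.
have d8 : 0 < del / 8 by lra.
have d84 : del / 8 < del / 4 by lra.
have [q1 hq1] := rat_approx z.1 _ d8.
have [q2 hq2] := rat_approx z.2 _ d8.
have [s hs] := rat_between _ _ d84.
move: hs => /andP[hs1 hs2].
exists (pickle (q1, q2, s, s)); first exact: I.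
rewrite /Uk pickleK.
have t1 := nrm_tri (map_mx ratr q1) z.1 (map_mx ratr q2).
have t2 := nrm_tri z.1 z.2 (map_mx ratr q2).
have e1 := nrmB (map_mx ratr q1) z.1.
have e2 := nrmB (map_mx ratr q2) z.2.
split; first by split; rewrite /rball /=; lra.
lra.
Qed.

Lemma U_meas r : measurable (U r).
Proof.
apply: bigcupT_measurable => k; rewrite /Uk.
case: (unpickle k) => [[[[q1 q2] s1] s2]|]; last exact: measurable0.
have mX : measurable (rball q1 s1 `*` rball q2 s2 : set (Borel R d * Borel R d)%type).
  by apply: measurableX; exact: rball_meas.
have [p|np] := pselect (nrm (map_mx ratr q1 - map_mx ratr q2) + ratr s1 + ratr s2 < r).
  rewrite (_ : [set z | _ /\ _] = rball q1 s1 `*` rball q2 s2) //.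
  by apply/seteqP; split => z /=; [case | move=> h; split].
rewrite (_ : [set z | _ /\ _] = set0); first exact: measurable0.
by apply/seteqP; split => z //= [].
Qed.
End nrm.

Lemma meas_and_prop dd (T : measurableType dd) (A : set T) (Q : Prop) :
  measurable A -> measurable [set z | A z /\ Q].
Proof.
move=> mA; have [p|np] := pselect Q.
  rewrite (_ : [set z | _ /\ _] = A); first exact: mA.
  by apply/seteqP; split => z /=; [case | ].
rewrite (_ : [set z | _ /\ _] = set0); first exact: measurable0.
by apply/seteqP; split => z //= [].
Qed.

Lemma meas_or_prop dd (T : measurableType dd) (A : set T) (Q : Prop) :
  measurable A -> measurable [set z | Q \/ A z].
Proof.
move=> mA; have [p|np] := pselect Q.
  rewrite (_ : [set z | _ \/ _] = setT); first exact: measurableT.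
  by apply/seteqP; split => z //= _; left.
rewrite (_ : [set z | _ \/ _] = A); first exact: mA.
by apply/seteqP; split => z /=; [case | right].
Qed.

Theorem lemma1 (R : realType) (d n : nat) (Xi : set 'rV[R]_d)
  (nrm : 'rV[R]_d -> R)
  (dO : measure_display) (Omega : measurableType dO) (P : probability Omega R)
  (xi : nat -> Omega -> 'rV[R]_d)
  (rho : R -> R) (calX : set 'rV[R]_n) (g : 'rV[R]_n -> 'rV[R]_d -> R)
  (N : nat) (r : nat -> R) :
  is_polish Xi ->
  is_norm nrm ->
  (forall i, measurable_fun setT (xi i : Omega -> Borel R d)) ->
  (forall i, (0 < i)%N -> forall w, Xi (xi i w)) ->
  mutually_independent P xi ->
  (forall t, 0 <= t -> 0 <= rho t) -> rho 0 = 0 ->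
  (forall i k, (0 < i)%N ->
     (wasserstein nrm (law P (xi i)) (law P (xi (i + k)%N)) <= (rho k%:R)%:E)%E) ->
  (forall x, measurable_fun setT (g x : Borel R d -> R)) ->
  (0 < N)%N ->
  (forall i, (0 < i <= N)%N -> 0 < r i) ->
  forall x, calX x -> forall i, (0 < i <= N)%N ->
    measurable [set w | forall u, Xi u -> nrm (u - xi i w) <= r i -> g x u <= 0] ->
    (P [set w | (forall u, Xi u -> nrm (u - xi i w) <= r i -> g x u <= 0)%R]
      <= P [set w | (g x (xi N.+1 w) <= 0)%R] + (rho (N.+1 - i)%:R / r i)%R%:E)%E.
Proof.
move=> _ hn hxi hXi _ _ _ hW hg _ hr x _ i /andP[i0 iN] mA.
have r0p : 0 < r i by apply: hr; rewrite i0 iN.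
have tri := @nrm_tri R d nrm hn.
have nB := @nrmB R d nrm hn.
have nge0 := @nrm_ge0 R d nrm hn.
have mpre : forall j (S : set (Borel R d)), measurable S -> measurable (xi j @^-1` S).
  by move=> j S mS; have := hxi j measurableT S mS; rewrite setTI.
pose G := [set u : 'rV[R]_d | g x u <= 0].
have mG : measurable (G : set (Borel R d)).
  have := hg x measurableT _ (measurable_itv `]-oo, 0]).
  rewrite setTI (_ : _ @^-1` _ = G) //.
pose Bad := ~` G.
have mBad : measurable (Bad : set (Borel R d)) by exact: measurableC.
pose nu := fun S : set 'rV[R]_d => P (xi N.+1 @^-1` S).
pose ball := @rball R d nrm.
pose good (q0 : 'rV[rat]_d) (s0 : rat) : Prop := nu (ball q0 s0 `&` Bad) = 0.
pose I2 := ('rV[rat]_d * rat)%type.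
pose Bk (k : nat) : set (Borel R d) := match @unpickle I2 k with
  | Some (q0, s0) => [set v | good q0 s0 \/
       (~` [set v | nrm (v - map_mx ratr q0) < r i - ratr s0]) v]
  | None => setT end.
pose B := \bigcap_k Bk k.
pose Mk (k : nat) : set (Borel R d) := match @unpickle I2 k with
  | Some (q0, s0) => [set v | (ball q0 s0 `&` Bad) v /\ good q0 s0]
  | None => set0 end.
pose M := \bigcup_k Mk k.
have mBk k : measurable (Bk k).
  rewrite /Bk; case: (unpickle k) => [[q0 s0]|]; last exact: measurableT.
  apply: meas_or_prop; apply: measurableC; apply: open_meas => //.
  exact: open_nrm_lt.
have mB : measurable B by apply: bigcapT_measurable.
have mMk k : measurable (Mk k).
  rewrite /Mk; case: (unpickle k) => [[q0 s0]|]; last exact: measurable0.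
  apply: meas_and_prop; apply: measurableI => //; exact: rball_meas.
have mM : measurable M by apply: bigcupT_measurable.
have AB : [set w | forall u, Xi u -> nrm (u - xi i w) <= r i -> g x u <= 0]
    `<=` xi i @^-1` B.
  move=> w hw k _; rewrite /Bk; case: (unpickle k) => [[q0 s0]|] //.
  have [h|h] := pselect (nrm (xi i w - map_mx ratr q0) < r i - ratr s0); last by right.
  left; rewrite /good /nu.
  rewrite (_ : xi N.+1 @^-1` _ = set0); first exact: measure0.
  apply/seteqP; split => // w' [/= hb hbad]; apply: hbad.
  apply: hw; first exact: hXi.
  have := tri (xi N.+1 w') (map_mx ratr q0) (xi i w).
  have := nB (xi i w) (map_mx ratr q0).
  rewrite /ball /rball /= in hb.
  move=> e1 t1; apply/ltW.
  move: e1 t1 hb h.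
  move: (nrm _) (nrm _) (nrm _) (nrm _) => a1 a2 a3 a4.
  move=> *; lra.
have nuM : nu M = 0.
  have : P.-negligible (\bigcup_k (xi N.+1 @^-1` Mk k)).
    apply: negligible_bigcup => k; exists (xi N.+1 @^-1` Mk k); split => //.
      exact: mpre.
    rewrite /Mk; case: (unpickle k) => [[q0 s0]|]; last first.
      by rewrite preimage_set0 measure0.
    have [h|h] := pselect (good q0 s0).
      apply/eqP; rewrite eq_le measure_ge0 andbT; rewrite -h.
      apply: le_measure; rewrite ?inE.
      - by apply: mpre; apply: meas_and_prop; apply: measurableI => //; exact: rball_meas.
      - by apply: mpre; apply: measurableI => //; exact: rball_meas.
      - by move=> w [].
    rewrite (_ : _ @^-1` _ = set0); first exact: measure0.
    by apply/seteqP; split => w //= [_ ?].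
  case=> Z [mZ PZ sub]; apply/eqP; rewrite eq_le measure_ge0 andbT -PZ.
  apply: le_measure; rewrite ?inE; [exact: mpre | exact: mZ |].
  by rewrite preimage_bigcup.
have cover : (B `*` setT : set (Borel R d * Borel R d)%type) `<=`
    ((setT `*` G) `|` ~` @U R d nrm (r i)) `|` (setT `*` M).
  move=> [v u] [/= hv _].
  have [hu|hu] := pselect (G u); first by left; left.
  have [hU|hU] := pselect (@U R d nrm (r i) (v, u)); last by left; right.
  right; split => //=.
  have hl := @U_lt R d nrm hn _ _ hU; rewrite /= in hl.
  set del := r i - nrm (v - u).
  have hdel : del = r i - nrm (v - u) by [].
  have dp : 0 < del by rewrite /del subr_gt0.
  clearbody del.
  have d8 : 0 < del / 8 by lra.
  have d84 : del / 8 < del / 4 by lra.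
  have [q hq] := @rat_approx R d nrm hn u _ d8.
  have [s hs] := @rat_between R _ _ d84.
  move: hs => /andP[hs1 hs2].
  have hb : ball q s u by rewrite /ball /rball /=; lra.
  exists (pickle (q, s)); first exact: I.
  have := hv (pickle (q, s)) I; rewrite /Bk /Mk pickleK => -[hg0|hfar].
    by split => //; split.
  exfalso; apply: hfar => /=.
  have := tri v u (map_mx ratr q).
  move: hq hdel hs1 hs2 d8 dp.
  move: (nrm _) (nrm _) (nrm _) => a1 a2 a3.
  move=> *; lra.
have mU := @U_meas R d nrm hn (r i).
have mD : measurable (~` @U R d nrm (r i)) := measurableC mU.
have hk : (i + (N.+1 - i))%N = N.+1 by rewrite subnKC // leqW.
have hW' := hW i (N.+1 - i)%N i0; rewrite hk in hW'.
apply/lee_addgt0Pr => e e0.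
have er : 0 < e * r i by rewrite mulr_gt0.
have : (wasserstein nrm (law P (xi i)) (law P (xi N.+1)) <
        (rho (N.+1 - i)%:R + e * r i)%:E)%E.
  apply: le_lt_trans hW' _; rewrite lte_fin; lra.
rewrite /wasserstein => /ereal_inf_lt [y [pi [hc1 hc2] <-] hy].
have mk : ((r i)%:E * pi (~` @U R d nrm (r i)) <=
           \int[pi]_z (nrm (z.1 - z.2))%:E)%E.
  rewrite ge0_integralTE; last by move=> z; rewrite lee_fin nge0.
  pose h := scale_nnsfun (indic_nnsfun R mD) (ltW r0p).
  have -> : ((r i)%:E * pi (~` @U R d nrm (r i)) = sintegral pi h)%E.
    rewrite -[X in (_ * X)%E](sintegral_indic pi).
    rewrite -(sintegralrM pi (r i) (indic_nnsfun R mD)).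
    by [].
  apply: ereal_sup_ubound; exists h => // z.
  rewrite /h /= lee_fin.
  change (r i * \1_(~` @U R d nrm (r i)) z <= nrm (z.1 - z.2)); rewrite indicE.
  have [zD|zD] := boolP (z \in ~` @U R d nrm (r i)); last by rewrite mulr0 nge0.
  rewrite mulr1; move: zD; rewrite inE => zD.
  rewrite leNgt; apply/negP => hz; apply: zD.
  exact: (@lt_U R d nrm hn).
set D := ~` @U R d nrm (r i).
have mBT : measurable (B `*` setT : set (Borel R d * Borel R d)%type).
  exact: measurableX.
have mTG : measurable (setT `*` G : set (Borel R d * Borel R d)%type).
  exact: measurableX.
have mTM : measurable (setT `*` M : set (Borel R d * Borel R d)%type).
  exact: measurableX.
have h1 : (P [set w | (forall u, Xi u -> nrm (u - xi i w) <= r i -> g x u <= 0)%R]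
    <= P (xi i @^-1` B))%E.
  apply: le_measure; [rewrite inE; exact: mA | rewrite inE; exact: mpre | exact: AB].
have h2 : P (xi i @^-1` B) = pi (B `*` setT) by rewrite hc1.
have h3 : (pi (B `*` setT) <= pi (((setT `*` G) `|` D) `|` (setT `*` M)))%E.
  apply: le_measure => //; rewrite inE //.
  by apply: measurableU => //; exact: measurableU.
have h4 : (pi (((setT `*` G) `|` D) `|` (setT `*` M)) <=
     pi (setT `*` G) + pi D + pi (setT `*` M))%E.
  apply: le_trans (measureU2 _ _ _) _ => //; first exact: measurableU.
  apply: leeD2r; exact: measureU2.
have h5 : pi (setT `*` G) = P [set w | (g x (xi N.+1 w) <= 0)%R] by rewrite hc2.
have h6 : pi (setT `*` M) = 0 by rewrite hc2.
have fD : pi D \is a fin_num by exact: fin_num_measure.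
have h7 : (pi D <= (rho (N.+1 - i)%:R / r i + e)%:E)%E.
  rewrite -(fineK fD) lee_fin.
  rewrite -(fineK fD) -EFinM in mk.
  have := le_lt_trans mk hy; rewrite lte_fin => hlt.
  have -> : rho (N.+1 - i)%:R / r i + e = (rho (N.+1 - i)%:R + e * r i) / r i.
    by field; rewrite gt_eqF.
  by rewrite ler_pdivlMr // mulrC; exact: ltW.
apply: le_trans h1 _; rewrite h2; apply: le_trans h3 _; apply: le_trans h4 _.
rewrite h5 h6 adde0 -addeA; apply: leeD2l; rewrite -EFinD; exact: h7.
Qed.
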